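(* Let $\triangle$ and $\square$ be the scenarios and $e$ the possibilistic model on $\triangle$ described in the context. There is no possibilistic empirical model $d$ on $\square$ and no possibilistic procedure $f\colon\square\to\triangle$ with $\mathrm{Emp}_{\mathbb B}(f)d\le e$. In particular, there is no probabilistic empirical model $d$ on $\square$ and probabilistic procedure $f\colon\square\to\triangle$ such that $\mathrm{Emp}(f)d$ equals the probabilistic model $e$.
   Context: A measurement scenario consists of a finite set of measurements, finite non-empty outcome sets $O_x$, and a simplicial complex of contexts (subsets containing $\emptyset$ and all singletons, closed under subsets); $\mathcal E(U)=\prod_{x\in U}O_x$. A simplicial relation $R$ from $\Sigma$ (on $X$) to $\Delta$ (on $Y$) is a relation $R\subseteq X\times Y$ with $R(\sigma)\in\Delta$ for all $\sigma\in\Sigma$. A deterministic procedure $f\colon S\to T$ is a pair $(\pi_f,\alpha_f)$, $\pi_f$ a simplicial relation from $\Sigma_T$ to $\Sigma_S$, $\alpha_{f,x}\colon\mathcal E_S(\pi_f(x))\to O_{T,x}$; probabilistic procedures are finitely supported probability distributions on deterministic ones, possibilistic procedures are non-empty finite sets of them. Probabilistic/possibilistic empirical models and the actions $\mathrm{Emp}$, $\mathrm{Emp}_{\mathbb B}$: for deterministic $f$, $(\mathrm{Emp}(f)e)_\sigma$ is the push-forward (resp. $(\mathrm{Emp}_{\mathbb B}(f)e)_\sigma$ the image) of $e_{\pi_f(\sigma)}$ along $s\mapsto(\alpha_{f,x}(s|_{\pi_f(x)}))_{x\in\sigma}$, extended by convex combination (resp. contextwise union); possibilistic models are ordered by contextwise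 inclusion. $\triangle$ has measurements $a,b,c$, each with outcomes $\{0,1\}$, and contexts all subsets of size at most $2$. $\square$ has measurements $p,q,r,u$, each with outcomes $\{0,1\}$, and maximal contexts $\{p,q\},\{q,r\},\{r,u\},\{u,p\}$ (so contexts are these, their subsets). The probabilistic model $e$ on $\triangle$ has $e_{\{a,b\}}$ uniform on $\{(0,1),(1,0)\}$, $e_{\{b,c\}}$ uniform on $\{(0,0),(1,1)\}$, $e_{\{a,c\}}$ uniform on $\{(0,0),(1,1)\}$, with uniform marginals on singletons; the possibilistic $e$ is its collection of supports. *)

(* Defs.v *)
From mathcomp Require Import all_boot all_order all_algebra.
From mathcomp Require Import reals.
From Stdlib Require List.
Set Implicit Arguments. Unset Strict Implicit. Unset Printing Implicit Defensive.
Import Order.TTheory GRing.Theory Num.Theory.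
Local Open Scope ring_scope.

(* Measurement scenarios with all outcome sets equal to {0,1} = bool
   (this covers both scenarios of the theorem).  A scenario is a finite type
   X of measurements together with a predicate Sigma on {set X} (contexts).

   An element of E(U) (a section / assignment on U) is represented as a
   finite function s : X -> option bool which is defined (Some _) exactly
   on U. *)

Definition section (X : finType) := {ffun X -> option bool}.

Definition is_sec (X : finType) (U : {set X}) (s : section X) : bool :=
  [forall x, (s x != None) == (x \in U)].

Definition restr (X : finType) (U : {set X}) (s : section X) : section X :=
  [ffun x => if x \in U then s x else None].

Definition poss_model (X : finType) (Sigma : pred {set X})
    (d : {set X} -> {set section X}) : Prop :=
  (forall sg, Sigma sg -> d sg != set0 /\ (forall s, s \in d sg -> is_sec sg s)) /\
  (forall sg tau, Sigma sg -> Sigma tau -> tau \subset sg ->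
      d tau = restr tau @: d sg).

Definition prob_model (R : realType) (X : finType) (Sigma : pred {set X})
    (d : {set X} -> section X -> R) : Prop :=
  (forall sg, Sigma sg ->
     [/\ forall s, 0 <= d sg s,
         forall s, ~~ is_sec sg s -> d sg s = 0
       & \sum_(s : section X) d sg s = 1]) /\
  (forall sg tau, Sigma sg -> Sigma tau -> tau \subset sg ->
     forall t, d tau t = \sum_(s : section X | restr tau s == t) d sg s).

(* Deterministic procedure f : S -> T (S on XS, T on XT):
   pi_f is a relation XT x XS, given by x |-> pi_f(x) ;
   alpha_{f,x} : E_S(pi_f(x)) -> bool, applied to restrictions to pi_f(x). *)
Record detproc (XS XT : finType) := DetProc {
  dp_pi : XT -> {set XS};
  dp_alpha : XT -> section XS -> bool }.

Definition pi_img (XS XT : finType) (f : detproc XS XT) (sg : {set XT}) : {set XS} :=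
  \bigcup_(x in sg) dp_pi f x.

Definition valid_dp (XS XT : finType) (SigS : pred {set XS}) (SigT : pred {set XT})
    (f : detproc XS XT) : Prop :=
  forall sg, SigT sg -> SigS (pi_img f sg).

Definition dp_out (XS XT : finType) (f : detproc XS XT) (sg : {set XT})
    (s : section XS) : section XT :=
  [ffun x => if x \in sg then Some (dp_alpha f x (restr (dp_pi f x) s)) else None].

Definition EmpB_det (XS XT : finType) (f : detproc XS XT)
    (d : {set XS} -> {set section XS}) (sg : {set XT}) : {set section XT} :=
  [set dp_out f sg s | s in d (pi_img f sg)].

(* Possibilistic procedure = non-empty finite set (list) of deterministic ones;
   action = contextwise union. *)
Definition EmpB (XS XT : finType) (F : seq (detproc XS XT))
    (d : {set XS} -> {set section XS}) (sg : {set XT}) : {set section XT} :=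
  \bigcup_(f <- F) EmpB_det f d sg.

Definition poss_proc (XS XT : finType) (SigS : pred {set XS}) (SigT : pred {set XT})
    (F : seq (detproc XS XT)) : Prop :=
  (0 < size F)%N /\ (forall f, List.In f F -> valid_dp SigS SigT f).

Definition Emp_det (R : realType) (XS XT : finType) (f : detproc XS XT)
    (d : {set XS} -> section XS -> R) (sg : {set XT}) (t : section XT) : R :=
  \sum_(s : section XS | dp_out f sg s == t) d (pi_img f sg) s.

(* Probabilistic procedure = finitely supported distribution on deterministic
   ones, given as a finite list of (weight, procedure); action = convex
   combination. *)
Definition Emp (R : realType) (XS XT : finType) (P : seq (R * detproc XS XT))
    (d : {set XS} -> section XS -> R) (sg : {set XT}) (t : section XT) : R :=
  \sum_(p <- P) p.1 * Emp_det p.2 d sg t.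

Definition prob_proc (R : realType) (XS XT : finType) (SigS : pred {set XS})
    (SigT : pred {set XT}) (P : seq (R * detproc XS XT)) : Prop :=
  [/\ forall p, List.In p P -> 0 <= p.1,
      \sum_(p <- P) p.1 = 1
    & forall p, List.In p P -> valid_dp SigS SigT p.2].

Definition ta : 'I_3 := @Ordinal 3 0 isT.
Definition tb : 'I_3 := @Ordinal 3 1 isT.
Definition tc : 'I_3 := @Ordinal 3 2 isT.
Definition tri_ctx : pred {set 'I_3} := fun sg => (#|sg| <= 2)%N.

Definition sp : 'I_4 := @Ordinal 4 0 isT.
Definition sq : 'I_4 := @Ordinal 4 1 isT.
Definition sr : 'I_4 := @Ordinal 4 2 isT.
Definition su : 'I_4 := @Ordinal 4 3 isT.
Definition sq_ctx : pred {set 'I_4} := fun sg =>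
  [|| sg \subset [set sp; sq], sg \subset [set sq; sr],
      sg \subset [set sr; su] | sg \subset [set su; sp]].

Definition e_poss (sg : {set 'I_3}) : {set section 'I_3} :=
  [set s | [&& is_sec sg s,
              (ta \in sg) && (tb \in sg) ==> (s ta != s tb),
              (tb \in sg) && (tc \in sg) ==> (s tb == s tc) &
              (ta \in sg) && (tc \in sg) ==> (s ta == s tc)]].

Definition e_prob (R : realType) (sg : {set 'I_3}) (s : section 'I_3) : R :=
  if s \in e_poss sg then (#|e_poss sg|%:R)^-1 else 0.

(* Main.v *)
Require Import Defs.
From mathcomp Require Import all_boot all_order all_algebra.
From mathcomp Require Import reals.
Set Warnings "-notation-overridden,-ambiguous-paths".
Lemma all4 (P : pred 'I_4) : (forall x, P x) <-> [&& P sp, P sq, P sr & P su].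
Import Order.TTheory GRing.Theory Num.Theory.
Local Open Scope ring_scope.
Proof.
split; first by move=> H; rewrite !H.
case/and4P=> H1 H2 H3 H4 [[|[|[|[|//]]]] Hx].
- by rewrite (bool_irrelevance Hx isT).
- by rewrite (bool_irrelevance Hx isT).
- by rewrite (bool_irrelevance Hx isT).
- by rewrite (bool_irrelevance Hx isT).
Qed.
Lemma sub4 (X Y : {set 'I_4}) : X \subset Y =
  [&& (sp \in X) ==> (sp \in Y), (sq \in X) ==> (sq \in Y), (sr \in X) ==> (sr \in Y)
    & (su \in X) ==> (su \in Y)].
Proof.
apply/subsetP/idP.
- move=> H; apply/and4P; split; apply/implyP; exact: H.
- move=> H x; have H' := proj2 (all4 (fun x => (x \in X) ==> (x \in Y))) H.
  exact/implyP/H'.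
Qed.
Lemma sq_ctxE X : sq_ctx X =
  [|| ~~ (sr \in X) && ~~ (su \in X), ~~ (sp \in X) && ~~ (su \in X),
      ~~ (sp \in X) && ~~ (sq \in X) | ~~ (sq \in X) && ~~ (sr \in X)].
Proof.
rewrite /sq_ctx !sub4 !inE /=.
by case: (sp \in X); case: (sq \in X); case: (sr \in X); case: (su \in X).
Qed.
Lemma comb (A B C : {set 'I_4}) : sq_ctx (A :|: B) -> sq_ctx (B :|: C) -> sq_ctx (A :|: C) ->
  sq_ctx (A :|: B :|: C).
Proof.
rewrite !sq_ctxE !inE.
by case: (sp \in A); case: (sq \in A); case: (sr \in A); case: (su \in A);
   case: (sp \in B); case: (sq \in B); case: (sr \in B); case: (su \in B);
   case: (sp \in C); case: (sq \in C); case: (sr \in C); case: (su \in C).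
Qed.
Lemma core (f : detproc 'I_4 'I_3) s :
  dp_out f [set ta; tb] s \in e_poss [set ta; tb] ->
  dp_out f [set tb; tc] s \in e_poss [set tb; tc] ->
  dp_out f [set ta; tc] s \in e_poss [set ta; tc] -> False.
Proof.
rewrite /e_poss !inE !ffunE !inE /=.
move=> /and3P[_ H1 _] /and3P[_ H2 _] /andP[_ H3].
by move: H1; rewrite (eqP H3) (eqP H2) eqxx.
Qed.
Definition Uf (f : detproc 'I_4 'I_3) := dp_pi f ta :|: dp_pi f tb :|: dp_pi f tc.

Lemma pi2 (f : detproc 'I_4 'I_3) x y : pi_img f [set x; y] = dp_pi f x :|: dp_pi f y.
Proof. by rewrite /pi_img bigcup_setU !big_set1. Qed.

Lemma tri2 x y : tri_ctx [set x; y].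
Proof. by rewrite /tri_ctx cards2; case: (x != y). Qed.

Lemma Uctx f : valid_dp sq_ctx tri_ctx f -> sq_ctx (Uf f).
Proof.
move=> vf; apply: comb.
- by rewrite -pi2; apply: vf; apply: tri2.
- by rewrite -pi2; apply: vf; apply: tri2.
- by rewrite -pi2; apply: vf; apply: tri2.
Qed.

Lemma restrK (A B : {set 'I_4}) s : A \subset B -> restr A (restr B s) = restr A s.
Proof.
move=> H; apply/ffunP => z; rewrite !ffunE; case: ifP => // /(subsetP H) -> //.
Qed.

Lemma outK (f : detproc 'I_4 'I_3) sg s :
  dp_out f sg (restr (pi_img f sg) s) = dp_out f sg s.
Proof.
apply/ffunP => x; rewrite !ffunE; case: ifP => // Hx.
by rewrite restrK //; apply: (bigcup_sup x Hx).
Qed.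

Lemma finish f s :
  (forall sg, tri_ctx sg -> pi_img f sg \subset Uf f -> dp_out f sg s \in e_poss sg) ->
  False.
Proof.
move=> H; apply: (core f s); apply: H; rewrite ?tri2 // pi2 /Uf;
  apply/subsetP => z; rewrite !inE; by case/orP => ->; rewrite ?orbT ?orTb.
Qed.

Section P.
Variable R : realType.

Lemma exists_pos (P : seq (R * detproc 'I_4 'I_3)) :
  (forall p, List.In p P -> 0 <= p.1) -> \sum_(p <- P) p.1 != 0 ->
  exists p, List.In p P /\ 0 < p.1.
Proof.
elim: P => [|q P IH] Hpos; first by rewrite big_nil eqxx.
rewrite big_cons => Hs.
have q0 : 0 <= q.1 by apply: Hpos; left.
case: (boolP (0 < q.1)) => [qp|]; first by exists q; split => //; left.
rewrite lt_def q0 andbT negbK => /eqP q1.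
have [p [Hin Hp]] : exists p, List.In p P /\ 0 < p.1.
  apply: IH; first by move=> p Hp; apply: Hpos; right.
  by move: Hs; rewrite q1 add0r.
by exists p; split => //; right.
Qed.

Lemma sum_ge0_in (g : R * detproc 'I_4 'I_3 -> R) P :
  (forall q, List.In q P -> 0 <= g q) -> 0 <= \sum_(q <- P) g q.
Proof.
elim: P => [|q P IH] H; first by rewrite big_nil.
rewrite big_cons addr_ge0 //; first by apply: H; left.
by apply: IH => p Hp; apply: H; right.
Qed.

Lemma sum_ge_in (g : R * detproc 'I_4 'I_3 -> R) P p :
  (forall q, List.In q P -> 0 <= g q) -> List.In p P -> g p <= \sum_(q <- P) g q.
Proof.
elim: P => [|q P IH] H //= Hin.
rewrite big_cons; case: Hin => [->|Hin].
- by rewrite lerDl; apply: sum_ge0_in => q' Hq'; apply: H; right.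
- apply: le_trans (IH _ Hin) _; first by move=> q' Hq'; apply: H; right.
  by rewrite lerDr; apply: H; left.
Qed.
End P.

Theorem mainTheorem14 (R : realType) :
  (~ exists (d : {set 'I_4} -> {set section 'I_4}) (F : seq (detproc 'I_4 'I_3)),
       [/\ poss_model sq_ctx d, poss_proc sq_ctx tri_ctx F
         & forall sg, tri_ctx sg -> EmpB F d sg \subset e_poss sg]) /\
  (~ exists (d : {set 'I_4} -> section 'I_4 -> R) (P : seq (R * detproc 'I_4 'I_3)),
       [/\ prob_model sq_ctx d, prob_proc sq_ctx tri_ctx P
         & forall sg, tri_ctx sg -> forall t, Emp P d sg t = e_prob R sg t]).
Proof.
split.
- move=> [d [F [[Hne Hcomp] [HF Hval] Hsub]]].
  case: F HF Hval Hsub => // f F' _ Hval Hsub.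
  have vf : valid_dp sq_ctx tri_ctx f by apply: Hval; left.
  have HU := Uctx _ vf.
  case: (Hne _ HU) => /set0Pn [s Hs] _.
  apply: (finish f s) => sg Htri HVU.
  have HV := vf sg Htri.
  rewrite -outK; apply: (subsetP (Hsub sg Htri)).
  rewrite /EmpB big_cons inE; apply/orP; left.
  apply: imset_f; rewrite (Hcomp _ _ HU HV HVU); exact: imset_f.
- move=> [d [P [[Hd Hcomp] [Hpos Hsum Hval] HE]]].
  have [p0 [Hin Hp0]] := @exists_pos R P Hpos (ltac:(by rewrite Hsum oner_eq0)).
  set f := p0.2.
  have vf : valid_dp sq_ctx tri_ctx f by apply: Hval.
  have HU := Uctx _ vf.
  have [dU0 _ dU1] := Hd _ HU.
  have [s Hs] : exists s, d (Uf f) s != 0.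
    case: (boolP [exists s, d (Uf f) s != 0]) => [/existsP//|].
    rewrite negb_exists => /forallP H.
    move: dU1; rewrite big1 => [/eqP|s _]; first by rewrite eq_sym oner_eq0.
    by move: (H s); rewrite negbK => /eqP.
  have sp0 : 0 < d (Uf f) s by rewrite lt_def Hs dU0.
  apply: (finish f s) => sg Htri HVU.
  have HV := vf sg Htri.
  have [dV0 _ _] := Hd _ HV.
  set V := pi_img f sg.
  set t := dp_out f sg s.
  have h1 : d (Uf f) s <= d V (restr V s).
    rewrite (Hcomp _ _ HU HV HVU) (bigD1 s) //= lerDl.
    by apply: sumr_ge0 => i _; apply: dU0.
  have h2 : d V (restr V s) <= Emp_det f d sg t.
    rewrite /Emp_det (bigD1 (restr V s)) /=; last by rewrite outK.
    by rewrite lerDl; apply: sumr_ge0 => i _; apply: dV0.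
  have h3 : p0.1 * Emp_det f d sg t <= Emp P d sg t.
    apply: (@sum_ge_in R (fun p => p.1 * Emp_det p.2 d sg t)) => // q Hq.
    apply: mulr_ge0; first exact: Hpos.
    have [dq0 _ _] := Hd _ (Hval q Hq sg Htri).
    by apply: sumr_ge0 => i _; apply: dq0.
  have pos : 0 < Emp P d sg t.
    apply: lt_le_trans h3; apply: mulr_gt0 => //.
    exact: (lt_le_trans sp0 (le_trans h1 h2)).
  move: pos; rewrite (HE sg Htri) /e_prob; case: ifP => //; by rewrite ltxx.
Qed.
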